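(* Let $a_1,\dots,a_n$ be a sequence of positive integers of one of the following eleven types: (1) $a_1$ with $a_1\ge2$; (2) $1,a_2$ with $a_2\ge2$; (3) $a_1,1$ with $a_1\ge2$; (4) $1,1,a_3$ with $a_3\ge2$; (5) $a_1,1,1$ with $a_1\ge2$; (6) $1,1,1,a_4$ with $a_4\ge2$; (7) $1,a_2,1,1$ with $a_2\ge2$; (8) $1,1,a_3,1$ with $a_3\ge2$; (9) $1,1,a_3,1,1$ with $a_3\ge2$; (10) $1,a_2,1,a_4,1$ with $a_2,a_4\ge2$; (11) $1,1,a_3,1,a_5,1$ with $a_3,a_5\ge2$. Let $T(0)=1$, $T(1)=a_1$, $T(i+1)=a_{i+1}T(i)+T(i-1)$. Then $V(a_1,\dots,a_n)\le T(n)$.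
   Context: $V(a_1,\dots,a_n)=\prod_{i=1}^n\frac{a_i+2}{2}$. *)

(* Defs.v *)
From mathcomp Require Import all_boot all_order all_algebra.
Set Implicit Arguments. Unset Strict Implicit. Unset Printing Implicit Defensive.
Import Order.TTheory GRing.Theory Num.Theory.

(* The sequence a_1,...,a_n is the list a, with a_i = nth 0 a (i-1). *)

Fixpoint T (a : seq nat) (i : nat) : nat :=
  match i with
  | 0 => 1
  | i'.+1 =>
      match i' with
      | 0 => nth 0 a 0
      | j.+1 => nth 0 a i' * T a i' + T a j
      end
  end.

Definition V (a : seq nat) : rat :=
  (\prod_(x <- a) ((x%:R + 2) / 2))%R.

Definition admissible (a : seq nat) : Prop :=
  (exists a1, 2 <= a1 /\ a = [:: a1]) \/
  (exists a2, 2 <= a2 /\ a = [:: 1; a2]) \/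
  (exists a1, 2 <= a1 /\ a = [:: a1; 1]) \/
  (exists a3, 2 <= a3 /\ a = [:: 1; 1; a3]) \/
  (exists a1, 2 <= a1 /\ a = [:: a1; 1; 1]) \/
  (exists a4, 2 <= a4 /\ a = [:: 1; 1; 1; a4]) \/
  (exists a2, 2 <= a2 /\ a = [:: 1; a2; 1; 1]) \/
  (exists a3, 2 <= a3 /\ a = [:: 1; 1; a3; 1]) \/
  (exists a3, 2 <= a3 /\ a = [:: 1; 1; a3; 1; 1]) \/
  (exists a2 a4, 2 <= a2 /\ 2 <= a4 /\ a = [:: 1; a2; 1; a4; 1]) \/
  (exists a3 a5, 2 <= a3 /\ 2 <= a5 /\ a = [:: 1; 1; a3; 1; a5; 1]).

(* Main.v *)
Require Import Defs.
From mathcomp Require Import all_boot all_order all_algebra.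
From mathcomp Require Import ring lra.
Import Order.TTheory GRing.Theory Num.Theory.

Theorem lemma3p4 (a : seq nat) :
  admissible a -> (V a <= (T a (size a))%:R)%R.
Proof.
rewrite /V /admissible => H.
repeat destruct H as [H|H].
all: first [destruct H as [x [y [hx [hy ->]]]] | destruct H as [x [hx ->]]].
all: rewrite /= !big_cons big_nil /= ?muln1 ?mul1n ?muln0 ?addn0.
all: rewrite ?natrD ?natrM ?mulrSr ?natrD ?natrM ?mulrSr ?mulr0n ?add0r.
all: set X := (x%:R : rat); have hX : (2 <= X)%R by rewrite /X (ler_nat rat 2 x).
all: try (set Y := (y%:R : rat); have hY : (2 <= Y)%R by rewrite /Y (ler_nat rat 2 y)).
all: clearbody X; try clearbody Y.
all: rewrite -?[(1+1)%R]/(2%R) -?[(1+(1+1))%R]/(3%R) -?[(2+1)%R]/(3%R) ?mulr1.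
all: nra.
Qed.
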